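(* Let $d$ be a positive integer and let $z_j\in\mathbb{C}$ be given for each $j\in[d]$ relatively prime to $d$. Suppose that for every $m\le 6$ and every $m$-tuple $(j_1,\dots,j_m)$ of elements of $[d]$ relatively prime to $d$ satisfying $j_1+\cdots+j_m\equiv 0\pmod d$, we have $z_{j_1}+\cdots+z_{j_m}\in\mathbb{Z}$. Then there exists an integer $c$ such that $z_j-\frac{cj}{d}\in\mathbb{Z}$ for all $j\in[d]$ relatively prime to $d$.
   Context: $[d]=\{1,\dots,d\}$; tuples may contain repeated entries, and $m\ge1$. *)

(* Defs.v *)
From HB Require Import structures.
From mathcomp Require Import all_boot all_order all_algebra.
From mathcomp Require Import complex.
From mathcomp Require Import reals.
Set Implicit Arguments. Unset Strict Implicit. Unset Printing Implicit Defensive.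
Import Order.TTheory GRing.Theory Num.Theory.
Local Open Scope ring_scope.

Definition is_intC (F : pzRingType) (z : F) : Prop := exists k : int, z = k%:~R.

Definition unit_index (d j : nat) : bool := [&& (0 < j)%N, (j <= d)%N & coprime j d].

(* Main.v *)
Require Import Defs.
From HB Require Import structures.
From mathcomp Require Import all_boot all_order all_algebra.
From mathcomp Require Import complex.
From mathcomp Require Import reals.
From mathcomp Require Import zify ring.
Import Order.TTheory GRing.Theory Num.Theory.

Section NT.
Local Open Scope nat_scope.
Lemma coprime_primes x d : 0 < d ->
  (forall p, prime p -> p %| d -> p %| x -> False) -> coprime x d.
Proof.
move=> d0 H; rewrite /coprime; apply/negPn/negP => hg.
have g0 : 0 < gcdn x d by rewrite gcdn_gt0 d0 orbT.
have g1 : 1 < gcdn x d by move: hg g0; case: (gcdn x d) => [|[|k]].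
have pp := pdiv_prime g1.
apply: (H _ pp).
  exact: dvdn_trans (pdiv_dvd _) (dvdn_gcdr _ _).
exact: dvdn_trans (pdiv_dvd _) (dvdn_gcdl _ _).
Qed.

Lemma exA d n : 1 < d -> 0 < n -> odd d || ~~ odd n ->
  exists a b, [&& 0 < a, a <= d & coprime a d] /\ [&& 0 < b, b <= d & coprime b d]
    /\ a + b = n %[mod d].
Proof.
move=> d1 n0 hodd.
have d0 : 0 < d by lia.
set m := d`_(\pi(n)^').
have F1 p : prime p -> p %| n -> ~~ (p %| m).
  move=> pp pn; apply/negP => pm.
  have := pnat_dvd pm (part_pnat _ _).
  rewrite pnatE // !inE /= mem_primes pp n0 pn //.
have F2 p : prime p -> p %| d -> ~~ (p %| n) -> p %| m.
  move=> pp pd pn.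
  have := pi_of_part (\pi(n)^') d0 p.
  rewrite !inE /= !mem_primes pp d0 pd n0 (negbTE pn) /= => h.
  by move: h; rewrite part_gt0 /=; case: (p %| m).
have Hd1 p : prime p -> p %| d -> ~~ (p %| d - 1).
  move=> pp pd; apply/negP => pd1.
  have : p %| (d - 1) + 1 by rewrite subnK.
  rewrite (dvdn_addr _ pd1) dvdn1 => /eqP p1; by rewrite p1 in pp.
have cop x : coprime x d -> 0 < x %% d /\ x %% d <= d /\ coprime (x %% d) d.
  move=> cx; rewrite coprime_modl cx; split; last by split => //; apply: ltnW; rewrite ltn_mod.
  rewrite lt0n; apply/negP => /eqP x0.
  by move: cx; rewrite -coprime_modl x0 /coprime gcd0n; move/eqP; lia.
exists ((m + (d - 1) * n) %% d), ((n.*2 + (d - 1) * m) %% d).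
split; last split.
- suff cx : coprime (m + (d - 1) * n) d by have [h1 [h2 h3]] := cop _ cx; rewrite h1 h2 h3.
  apply: coprime_primes => // p pp pd pa.
  case pn: (p %| n).
  - have : p %| m by rewrite -(dvdn_addr m (dvdn_mull (d - 1) pn)) addnC.
    by rewrite (negbTE (F1 p pp pn)).
  - have pm := F2 p pp pd (negbT pn).
    move: pa; rewrite (dvdn_addr _ pm) Euclid_dvdM // (negbTE (Hd1 p pp pd)) pn //.
- suff cx : coprime (n.*2 + (d - 1) * m) d by have [h1 [h2 h3]] := cop _ cx; rewrite h1 h2 h3.
  apply: coprime_primes => // p pp pd pa.
  case pn: (p %| n).
  - move: pa; have p2n : p %| n.*2 by rewrite -muln2 dvdn_mulr.
    rewrite (dvdn_addr _ p2n).
    by rewrite Euclid_dvdM // (negbTE (Hd1 p pp pd)) (negbTE (F1 p pp pn)).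
  - have pm := F2 p pp pd (negbT pn).
    move: pa; rewrite (dvdn_addl _ (dvdn_mull (d - 1) pm)) -muln2 Euclid_dvdM // pn /=.
    move=> p2; have p2e : p = 2 by apply/eqP; rewrite -dvdn_prime2 //.
    subst p. rewrite dvdn2 in pd; rewrite dvdn2 in pn.
    by move: hodd; rewrite (negbTE pd) pn.
- rewrite modnDm.
  apply/eqP; rewrite eqn_mod_dvd; last first.
    clearbody m; rewrite -addnn; nia.
  have -> : m + (d - 1) * n + (n.*2 + (d - 1) * m) - n = d * (m + n) by clearbody m; rewrite -muln2; nia.
  by rewrite dvdn_mulr.
Qed.

Lemma modn_add d x1 y1 x2 y2 : x1 = y1 %[mod d] -> x2 = y2 %[mod d] ->
  x1 + x2 = y1 + y2 %[mod d].
Proof. by move=> h1 h2; rewrite -modnDm h1 h2 modnDm. Qed.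

Lemma unit_neg d u : 1 < d -> unit_index d u -> unit_index d (d - u).
Proof.
move=> d1 /and3P[u0 ud cu].
have ud' : u < d.
  rewrite ltn_neqAle ud andbT; apply/negP => /eqP e; subst u.
  by move: cu; rewrite /coprime gcdnn => /eqP; lia.
apply/and3P; split; [lia | lia |].
have e1 : gcdn (d - u) d = gcdn (d - u) u by rewrite -{2}(subnK ud) gcdnDl.
have e2 : gcdn u d = gcdn u (d - u) by rewrite -{1}(subnK ud) gcdnDr.
by rewrite /coprime e1 gcdnC -e2.
Qed.

End NT.
Arguments unit_neg {d u}.
Arguments exA {d n}.
Arguments modn_add {d x1 y1 x2 y2}.

Local Open Scope ring_scope.

Section Int.
Variable F : pzRingType.
Lemma isI0 : is_intC (0 : F). Proof. by exists 0. Qed.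
Lemma isID (x y : F) : is_intC x -> is_intC y -> is_intC (x + y).
Proof. by move=> [a ->] [b ->]; exists (a + b); rewrite intrD. Qed.
Lemma isIN (x : F) : is_intC x -> is_intC (- x).
Proof. by move=> [a ->]; exists (- a); rewrite intrN. Qed.
Lemma isIB (x y : F) : is_intC x -> is_intC y -> is_intC (x - y).
Proof. by move=> hx hy; apply: isID => //; apply: isIN. Qed.
Lemma isIe (x y : F) : x = y -> is_intC y -> is_intC x.
Proof. by move=> ->. Qed.
End Int.
Arguments isI0 {F}.
Arguments isID {F x y}.
Arguments isIN {F x}.
Arguments isIB {F x y}.
Arguments isIe {F x} y.

Theorem lemma3p8 (R : realType) (d : nat) (z : nat -> R[i]) :
  (0 < d)%N ->
  (forall (m : nat) (js : m.-tuple nat),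
      (1 <= m <= 6)%N ->
      all (unit_index d) js ->
      ((\sum_(j <- js) j) %% d)%N = 0%N ->
      is_intC (\sum_(j <- js) z j)) ->
  exists c : int, forall j : nat, unit_index d j ->
    is_intC (z j - (c * j%:Z)%:~R / d%:R).
Proof.
move=> d0 H.
have H' (s : seq nat) : (1 <= size s <= 6)%N -> all (unit_index d) s ->
    (sumn s %% d)%N = 0%N -> is_intC (\sum_(j <- s) z j).
  move=> hs ha hm; have := H _ (in_tuple s) hs ha.
  rewrite sumnE in hm; exact.
have [d1|d1] := leqP d 1%N.
  have de : d = 1%N by lia.
  subst d; exists 0 => j /and3P[j0 j1 _].
  have -> : j = 1%N by lia.
  have := H' [:: 1%N] isT isT (erefl _).
  rewrite big_cons big_nil addr0 => h.
  by apply: (isIe _ _ h); rewrite [_ / _](_ : _ = 0) ?subr0 // intrM mul0r mul0r.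
have U1 : unit_index d 1 by rewrite /unit_index coprime1n andbT; apply/andP; split => //; lia.
have pair u : unit_index d u -> is_intC (z u + z (d - u)%N).
  move=> hu; have hu' := unit_neg d1 hu.
  have := H' [:: u; (d - u)%N] isT; rewrite /= hu hu' /= => h.
  have hud : (u <= d)%N by case/and3P: hu.
  move: h; rewrite !big_cons big_nil addr0 addn0 subnKC // modnn; apply => //.
have rel : forall N P, all (unit_index d) P -> all (unit_index d) N ->
    (size P + size N <= 6)%N -> (sumn P = sumn N %[mod d])%N ->
    is_intC (\sum_(j <- P) z j - \sum_(j <- N) z j).
  elim => [|u N IH] P hP hN hs hm.
    rewrite big_nil subr0; case: P hP hs hm => [|p P'] hP hs hm.
      by rewrite big_nil; apply: isI0.
    apply: H' => //; first by move: hs => /=; lia.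
    by rewrite hm mod0n.
  move: hN => /andP[hu hN].
  have hud : (u <= d)%N by case/and3P: hu.
  have := IH (P ++ [:: (d - u)%N]) _ hN _ _.
  rewrite big_cat !big_cons !big_nil => h.
  apply: (isIe ((\sum_(i <- P) z i + (z (d - u)%N + 0) - \sum_(j <- N) z j)
                     - (z u + z (d - u)%N))).
    by ring.
  apply: isIB; first apply: h.
  - by rewrite all_cat hP /= (unit_neg d1 hu).
  - by move: hs; rewrite size_cat /=; lia.
  - rewrite sumn_cat /= addn0 -modnDml hm modnDml.
    have -> : (u + sumn N + (d - u)%N = sumn N + d)%N by lia.
    by rewrite modnDr.
  exact: pair.
have exU k : (odd d || ~~ odd (k + d)) -> exists a b,
    unit_index d a /\ unit_index d b /\ (a + b = k %[mod d])%N.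
  move=> h; have kd : (0 < k + d)%N by lia.
  have [a [b [ha [hb hab]]]] := exA d1 kd h.
  by exists a, b; rewrite modnDr in hab.
have claimO : odd d -> forall k a b, unit_index d a -> unit_index d b ->
    (a + b = k %[mod d])%N -> is_intC (z a + z b - z 1%N *+ k).
  move=> hod; elim => [|k IH] a b ha hb hab.
    rewrite mulr0n subr0.
    have := rel [::] [:: a; b]; rewrite /= ha hb big_nil subr0 !big_cons big_nil addr0.
    apply => //; by rewrite addn0 hab.
  have [a0 [b0 [ha0 [hb0 hab0]]]] := exU k (introT orP (or_introl hod)).
  have h1 := IH a0 b0 ha0 hb0 hab0.
  have := rel [:: a0; b0; 1%N] [:: a; b]; rewrite /= ha hb ha0 hb0 U1 !big_cons big_nil => h2.
  have {h2} h2 := h2 isT isT isT _.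
  apply: (isIe (z a + (z b + 0) - (z a0 + (z b0 + (z 1%N + 0))) + (z a0 + z b0 - z 1%N *+ k))).
    by rewrite mulrS; ring.
  apply: isID => //; apply: h2.
  by rewrite !addn0 hab addnA (modn_add hab0 (erefl (1 %% d)%N)) addn1.
have claimE : ~~ odd d -> forall k a b, unit_index d a -> unit_index d b ->
    (a + b = k.*2 %[mod d])%N -> is_intC (z a + z b - z 1%N *+ k.*2).
  move=> hod; elim => [|k IH] a b ha hb hab.
    rewrite mulr0n subr0.
    have := rel [::] [:: a; b]; rewrite /= ha hb big_nil subr0 !big_cons big_nil addr0.
    apply => //; by rewrite addn0 hab.
  have [a0 [b0 [ha0 [hb0 hab0]]]] := exU k.*2 ltac:(by rewrite oddD odd_double (negbTE hod) orbT).
  have h1 := IH a0 b0 ha0 hb0 hab0.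
  have := rel [:: a0; b0; 1%N; 1%N] [:: a; b]; rewrite /= ha hb ha0 hb0 U1 !big_cons big_nil => h2.
  have {h2} h2 := h2 isT isT isT _.
  apply: (isIe (z a + (z b + 0) - (z a0 + (z b0 + (z 1%N + (z 1%N + 0)))) + (z a0 + z b0 - z 1%N *+ k.*2))).
    by rewrite doubleS !mulrS; ring.
  apply: isID => //; apply: h2.
  rewrite !addn0 hab addnA (modn_add hab0 (erefl ((1 + 1) %% d)%N)).
  by rewrite doubleS addn2.
have claim k a b : (odd d || ~~ odd k) -> unit_index d a -> unit_index d b ->
    (a + b = k %[mod d])%N -> is_intC (z a + z b - z 1%N *+ k).
  case hod: (odd d) => /= hk.
    exact: claimO.
  have := claimE (negbT hod) k./2; rewrite even_halfK //; exact.
have hd : is_intC (z 1%N *+ d).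
  have h := claim d 1%N (d - 1)%N (orbN _) U1 (unit_neg d1 U1).
  have hp := pair 1%N U1.
  apply: (isIe _ _ (isIB hp (h _))); first by ring.
  by rewrite subnKC //; lia.
case: hd => c hc; exists c => j hj.
have hj' : (odd d || ~~ odd j.+1).
  case hod: (odd d) => //=; rewrite negbK.
  case/and3P: hj => _ _ cj.
  apply: contraT => ej.
  have h2j : (2 %| j)%N by rewrite dvdn2 ej.
  have := coprime_dvdl h2j cj.
  by rewrite prime_coprime // dvdn2 hod.
have := claim j.+1 j 1%N hj' hj U1 ltac:(by rewrite addn1).
apply: isIe.
rewrite intrM -hc.
have dn0 : (d%:R : R[i]) != 0 by rewrite pnatr_eq0 -lt0n.
rewrite -mulr_natr mulrS -mulr_natr.
have -> : ((j%:Z)%:~R : R[i]) = j%:R by [].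
by field.
Qed.
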